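(* Let $f_1,\dots,f_k\in\mathbb{K}[\mathbf{x}]$ be nonzero multihomogeneous polynomials and $<$ a monomial order on $\mathbb{K}[\mathbf{x}]$. For every $\mathbf{d}\in\mathbb{Z}^r$, the polynomials corresponding to the rows of the matrix $\mathrm{M_3H}(\{f_1,\dots,f_k\},\mathbf{d},<)$ span the $\mathbb{K}$-vector space $[\langle f_1,\dots,f_k\rangle]_{\mathbf{d}}$.
   Context: $\mathbb{K}$ is a field of characteristic $0$; $\mathbb{K}[\mathbf{x}]$ is the polynomial ring in variables $x_{i,0},\dots,x_{i,n_i}$ ($1\le i\le r$), $\mathbb{Z}^r$-graded with $x_{i,j}$ of degree the $i$-th standard basis vector; $\mathbb{K}[\mathbf{x}]_{\mathbf{d}}$ and $[I]_{\mathbf{d}}$ denote multidegree-$\mathbf{d}$ parts (zero if $\mathbf{d}$ has a negative coordinate). A Macaulay matrix has columns indexed by monomials and rows representing polynomials (entry = coefficient). The procedure $\mathrm{M_3H}(\{f_1,\dots,f_k\},\mathbf{d},<)$ returns a Macaulay matrix with columns indexed by the monomials of $\mathbb{K}[\mathbf{x}]_{\mathbf{d}}$ in decreasing order for $<$, defined recursively: if $k=1$, start from the empty such matrix and set $\mathfrak{L}=\emptyset$; if $k>1$, start from the matrix $\mathrm{M_3H}(\{f_1,\dots,f_{k-1}\},\mathbf{d},<)$ and let $\mathfrak{L}$ be the set of leading monomials (for $<$) of the nonzero rows of the Gaussian elimination (row echelon form) of $\mathrm{M_3H}(\{f_1,\dots,f_{k-1}\},\mathbf{d}-\deg(f_k),<)$.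 Then, for every monomial $\mathbf{x}^\beta\in\mathbb{K}[\mathbf{x}]_{\mathbf{d}-\deg(f_k)}$ with $\mathbf{x}^\beta\notin\mathfrak{L}$, append the row $\mathbf{x}^\beta\cdot f_k$. Return the resulting matrix. *)

(* Defs.v *)
From HB Require Import structures.
From mathcomp Require Import all_boot all_algebra.
From mathcomp Require Import mpoly.

Set Implicit Arguments.
Unset Strict Implicit.
Unset Printing Implicit Defensive.

Import GRing.Theory.
Local Open Scope ring_scope.

(* Variables are indexed by 'I_N; the block (grading) of each variable is
   given by grp : 'I_N -> 'I_r, so variable j has multidegree e_(grp j). *)

Section Multigraded.
Variables (N r : nat) (grp : 'I_N -> 'I_r).

Definition mdegv (m : 'X_{1..N}) (i : 'I_r) : nat :=
  (\sum_(j < N | grp j == i) m j)%N.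

Definition mnm_of_deg (d : 'I_r -> int) (m : 'X_{1..N}) : bool :=
  [forall i, (mdegv m i)%:Z == d i].

(* the list of all monomials of K[x]_d (empty if d has a negative entry) *)
Definition monos (d : 'I_r -> int) : seq 'X_{1..N} :=
  [seq val m | m <- Finite.enum 'X_{1..N < (\sum_(i < r) `|d i|).+1}
             & mnm_of_deg d (val m)].

Variable K : fieldType.

(* p lies in K[x]_d (the zero polynomial lies in every K[x]_d) *)
Definition is_mhomog (d : 'I_r -> int) (p : {mpoly K[N]}) : Prop :=
  forall m, m \in msupp p -> mnm_of_deg d m.

Definition multihomogeneous (p : {mpoly K[N]}) : Prop :=
  exists d, is_mhomog d p.

(* multidegree of a (nonzero multihomogeneous) polynomial *)
Definition pdeg (p : {mpoly K[N]}) (i : 'I_r) : int :=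
  (mdegv (head 0%MM (msupp p)) i)%:Z.

Definition in_ideal (fs : seq {mpoly K[N]}) (p : {mpoly K[N]}) : Prop :=
  exists g : 'I_(size fs) -> {mpoly K[N]}, p = \sum_(i < size fs) g i * fs`_i.

Definition in_span (s : seq {mpoly K[N]}) (p : {mpoly K[N]}) : Prop :=
  exists c : 'I_(size s) -> K, p = \sum_(i < size s) c i *: s`_i.

Definition monomial_order (le : rel 'X_{1..N}) : Prop :=
  [/\ reflexive le, antisymmetric le, transitive le, total le &
      ((forall m, le 0%MM m) /\
       (forall m1 m2 m, le m1 m2 -> le (m1 + m)%MM (m2 + m)%MM))].

Variable le : rel 'X_{1..N}.

(* leading monomial for le (max of the support; 0 for p = 0) *)
Definition lm (p : {mpoly K[N]}) : 'X_{1..N} :=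
  foldr (fun m acc => if le acc m then m else acc) 0%MM (msupp p).

Definition ltm_ (a b : 'X_{1..N}) : bool := le a b && (a != b).

(* e is a row echelon form (result of Gaussian elimination) of the Macaulay
   matrix whose rows are s, columns ordered decreasingly for le: same number of
   rows, same row space, nonzero rows first with strictly decreasing leading
   monomials, then zero rows. *)
Definition is_ref (s e : seq {mpoly K[N]}) : Prop :=
  [/\ size e = size s,
      (forall p, in_span s p <-> in_span e p) &
      exists e1 k, [/\ e = e1 ++ nseq k 0, all (fun q => q != 0) e1 &
                       sorted (fun a b => ltm_ (lm b) (lm a)) e1]].

Variable ech : seq {mpoly K[N]} -> seq {mpoly K[N]}.

(* M3H on the reversed list gs = [:: f_k; ...; f_1]; a Macaulay matrix is
   represented by the list of polynomials of its rows. *)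
Fixpoint M3Hr (gs : seq {mpoly K[N]}) (d : 'I_r -> int) {struct gs}
  : seq {mpoly K[N]} :=
  match gs with
  | [::] => [::]
  | f :: gs' =>
    let d' := fun i => d i - pdeg f i in
    let L := [seq lm e | e <- ech (M3Hr gs' d') & e != 0] in
    M3Hr gs' d ++ [seq 'X_[b] * f | b <- monos d' & b \notin L]
  end.

Definition M3H (fs : seq {mpoly K[N]}) (d : 'I_r -> int) :=
  M3Hr (rev fs) d.

End Multigraded.

(* Main.v *)
Require Import Defs.
From HB Require Import structures.
From mathcomp Require Import all_boot all_algebra.
From mathcomp Require Import mpoly.
Import GRing.Theory.
Set Implicit Arguments.
Unset Strict Implicit.
Local Open Scope ring_scope.

Section Helpers.
Variables (K : fieldType) (N r : nat) (grp : 'I_N -> 'I_r).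
Local Notation P := {mpoly K[N]}.

Lemma span0 (s : seq P) : in_span s 0.
Proof. by exists (fun _ => 0); rewrite big1 // => i _; rewrite scale0r. Qed.

Lemma spanD (s : seq P) p q : in_span s p -> in_span s q -> in_span s (p + q).
Proof.
case=> c -> [c' ->]; exists (fun i => c i + c' i).
by rewrite -big_split; apply: eq_bigr => i _; rewrite scalerDl.
Qed.

Lemma spanZ (s : seq P) a p : in_span s p -> in_span s (a *: p).
Proof.
case=> c ->; exists (fun i => a * c i).
by rewrite scaler_sumr; apply: eq_bigr => i _; rewrite scalerA.
Qed.

Lemma spanN (s : seq P) p : in_span s p -> in_span s (- p).
Proof. by move=> h; rewrite -scaleN1r; apply: spanZ. Qed.

Lemma span_mem (s : seq P) q : q \in s -> in_span s q.
Proof.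
move=> qs; have hi : (index q s < size s)%N by rewrite index_mem.
pose i := Ordinal hi.
exists (fun j => (j == i)%:R).
rewrite (bigD1 i) //= eqxx scale1r big1 ?addr0 ?nth_index //.
by move=> j /negbTE ->; rewrite scale0r.
Qed.

Lemma span_ind (Q : P -> Prop) (s : seq P) : Q 0 ->
  (forall p q, Q p -> Q q -> Q (p + q)) -> (forall a p, Q p -> Q (a *: p)) ->
  (forall q, q \in s -> Q q) -> forall p, in_span s p -> Q p.
Proof.
move=> h0 hD hZ hm p [c ->]; apply: big_ind => // i _.
by apply: hZ; apply: hm; apply: mem_nth.
Qed.

Lemma span_sub (s t : seq P) : (forall q, q \in s -> in_span t q) ->
  forall p, in_span s p -> in_span t p.
Proof.
move=> h; apply: span_ind => //; [exact: span0 | exact: spanD | exact: spanZ].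
Qed.

Lemma span_sum (s : seq P) (I : Type) (rr : seq I) (Pp : pred I) (F : I -> P) :
  (forall i, Pp i -> in_span s (F i)) -> in_span s (\sum_(i <- rr | Pp i) F i).
Proof. by move=> h; apply: big_ind => //; [exact: span0 | exact: spanD]. Qed.

Lemma ideal0 (s : seq P) : in_ideal s 0.
Proof. by exists (fun _ => 0); rewrite big1 // => i _; rewrite mul0r. Qed.

Lemma idealD (s : seq P) p q : in_ideal s p -> in_ideal s q -> in_ideal s (p + q).
Proof.
case=> c -> [c' ->]; exists (fun i => c i + c' i).
by rewrite -big_split; apply: eq_bigr => i _; rewrite mulrDl.
Qed.

Lemma idealM (s : seq P) g p : in_ideal s p -> in_ideal s (g * p).
Proof.
case=> c ->; exists (fun i => g * c i).
by rewrite mulr_sumr; apply: eq_bigr => i _; rewrite mulrA.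
Qed.

Lemma ideal_mem (s : seq P) q : q \in s -> in_ideal s q.
Proof.
move=> qs; have hi : (index q s < size s)%N by rewrite index_mem.
pose i := Ordinal hi.
exists (fun j => (j == i)%:R).
rewrite (bigD1 i) //= eqxx mul1r big1 ?addr0 ?nth_index //.
by move=> j /negbTE ->; rewrite mul0r.
Qed.

Lemma ideal_ind (Q : P -> Prop) (s : seq P) : Q 0 ->
  (forall p q, Q p -> Q q -> Q (p + q)) ->
  (forall g q, q \in s -> Q (g * q)) -> forall p, in_ideal s p -> Q p.
Proof.
move=> h0 hD hm p [c ->]; apply: big_ind => // i _.
by apply: hm; apply: mem_nth.
Qed.

Lemma ideal_sub (s t : seq P) : {subset s <= t} ->
  forall p, in_ideal s p -> in_ideal t p.
Proof.
move=> h; apply: ideal_ind; [exact: ideal0 | exact: idealD |].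
by move=> g q /h qt; apply: idealM; apply: ideal_mem.
Qed.

Lemma homog0 d : is_mhomog grp d (0 : P).
Proof. by move=> m; rewrite msupp0. Qed.

Lemma homogD d (p q : P) : is_mhomog grp d p -> is_mhomog grp d q ->
  is_mhomog grp d (p + q).
Proof. by move=> hp hq m /msuppD_le; rewrite mem_cat => /orP [/hp|/hq]. Qed.

Lemma homogZ d a (p : P) : is_mhomog grp d p -> is_mhomog grp d (a *: p).
Proof. by move=> hp m /msuppZ_le /hp. Qed.

Lemma homog_sum d (I : Type) (rr : seq I) (Pp : pred I) (F : I -> P) :
  (forall i, Pp i -> is_mhomog grp d (F i)) ->
  is_mhomog grp d (\sum_(i <- rr | Pp i) F i).
Proof. by move=> h; apply: big_ind => //; [exact: homog0 | exact: homogD]. Qed.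

Lemma mdegvD (m1 m2 : 'X_{1..N}) i :
  mdegv grp (m1 + m2)%MM i = (mdegv grp m1 i + mdegv grp m2 i)%N.
Proof. by rewrite /mdegv -big_split; apply: eq_bigr => j _; rewrite mnmDE. Qed.

Lemma homogXM (e d : 'I_r -> int) (b : 'X_{1..N}) (h : P) :
  is_mhomog grp e h -> (forall i, (mdegv grp b i)%:Z + e i = d i) ->
  is_mhomog grp d ('X_[b] * h).
Proof.
move=> hh hd m; rewrite mulrC (perm_mem (msuppMX h b)) => /mapP [m' m'h ->].
apply/forallP => i; rewrite mdegvD PoszD -hd.
by move/hh/forallP: m'h => /(_ i) /eqP ->.
Qed.

Lemma pdegE (e : 'I_r -> int) (h : P) :
  h != 0 -> is_mhomog grp e h -> forall i, pdeg grp h i = e i.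
Proof.
move=> nz hh i; rewrite /pdeg.
have : head 0%MM (msupp h) \in msupp h.
  case E: (msupp h) => [|x s] /=; last by rewrite inE eqxx.
  by move/msuppnil0: E nz => ->; rewrite eqxx.
by move/hh/forallP/(_ i)/eqP.
Qed.

Lemma monos_deg d m : m \in monos grp d -> mnm_of_deg grp d m.
Proof. by case/mapP => x; rewrite mem_filter => /andP [h _] ->. Qed.

Lemma deg_monos d m : mnm_of_deg grp d m -> m \in monos grp d.
Proof.
move=> hm.
have hb : (mdeg m < (\sum_(i < r) `|d i|).+1)%N.
  rewrite ltnS mdegE (partition_big grp predT) //=.
  apply: leq_sum => i _; move/forallP/(_ i)/eqP: hm => <-.
  by rewrite /mdegv; apply: eq_leq; apply: eq_bigl => j.
pose mb : 'X_{1..N < (\sum_(i < r) `|d i|).+1} := BMultinom hb.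
apply/mapP; exists mb => //; rewrite mem_filter hm /=.
by rewrite -enumT mem_enum.
Qed.

End Helpers.

Section Helpers2.
Variables (K : fieldType) (N r : nat) (grp : 'I_N -> 'I_r).
Local Notation P := {mpoly K[N]}.
Variable le : rel 'X_{1..N}.
Hypothesis hle : monomial_order le.

Let F (s : seq 'X_{1..N}) := foldr (fun m acc => if le acc m then m else acc) 0%MM s.

Lemma foldr_max s : (forall x, x \in s -> le x (F s)) /\ (s != [::] -> F s \in s).
Proof.
case: hle => hr ha ht htot [h0 _].
elim: s => [|y s [IH1 IH2]] //=; rewrite /F /=; fold (F s).
case: ifP => hy.
  split; last by rewrite inE eqxx.
  move=> x; rewrite inE => /orP [/eqP -> //|/IH1 hx]; exact: ht hx hy.
have hs : s != [::] by case: (s) hy => //=; rewrite h0.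
split; last by rewrite inE IH2 ?orbT.
move=> x; rewrite inE => /orP [/eqP ->|/IH1 //].
by case/orP: (htot (F s) y); rewrite ?hy.
Qed.

Lemma le_lm (p : P) m : m \in msupp p -> le m (lm le p).
Proof. by move=> h; have [H _] := foldr_max (msupp p); exact: H. Qed.

Lemma lm_supp (p : P) : p != 0 -> lm le p \in msupp p.
Proof.
move=> nz; have [_ H] := foldr_max (msupp p); apply: H.
by rewrite msupp_eq0.
Qed.

Lemma count_lt (s : seq 'X_{1..N}) m b : b \in s -> le m b -> ~~ le b m ->
  (count (fun x => le x m) s < count (fun x => le x b) s)%N.
Proof.
case: hle => hr ha ht _ _ hbs hmb hbm.
have sub : forall x, le x m -> le x b by move=> x hx; exact: ht hx hmb.
elim: s hbs => [|y s IH] //; rewrite inE /= => /orP [/eqP <-|hb].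
  rewrite hr (negbTE hbm) add0n add1n ltnS; exact: sub_count.
have := IH hb; case: (le y m) (sub y) => [->//|_] /=.
by rewrite add0n => h; apply: leq_trans h _; apply: leq_addl.
Qed.

Definition proj (d : 'I_r -> int) (p : P) : P :=
  \sum_(m <- msupp p) (if mnm_of_deg grp d m then p@_m else 0) *: 'X_[m].

Lemma proj_coef d p m : (proj d p)@_m = if mnm_of_deg grp d m then p@_m else 0.
Proof.
rewrite /proj (@raddf_sum _ _ (mcoeff m)).
rewrite (eq_bigr (fun x => (if mnm_of_deg grp d x then p@_x else 0) * (x == m)%:R)); last first.
  by move=> x _ /=; rewrite mcoeffZ mcoeffX.
case: (boolP (m \in msupp p)) => hm.
  rewrite (bigD1_seq m) ?msupp_uniq //= eqxx mulr1 big1 ?addr0 //.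
  by move=> x /negbTE ->; rewrite mulr0.
rewrite big1_seq; last first.
  by move=> x /= xs; case: eqP => [e|]; [rewrite -e xs in hm| rewrite mulr0].
by rewrite memN_msupp_eq0 // if_same.
Qed.

Lemma projD d p q : proj d (p + q) = proj d p + proj d q.
Proof.
apply/mpolyP => m; rewrite mcoeffD !proj_coef mcoeffD.
by case: ifP; rewrite ?addr0.
Qed.

Lemma projZ d a p : proj d (a *: p) = a *: proj d p.
Proof.
apply/mpolyP => m; rewrite mcoeffZ !proj_coef mcoeffZ.
by case: ifP; rewrite ?mulr0.
Qed.

Lemma proj0 d : proj d 0 = 0.
Proof. by rewrite /proj msupp0 big_nil. Qed.

Lemma proj_sum d (I : Type) (rr : seq I) (Pp : pred I) (G : I -> P) :
  proj d (\sum_(i <- rr | Pp i) G i) = \sum_(i <- rr | Pp i) proj d (G i).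
Proof.
elim: rr => [|x rr IH]; first by rewrite !big_nil proj0.
by rewrite !big_cons; case: ifP => _; rewrite ?projD IH.
Qed.

Lemma proj_id d p : is_mhomog grp d p -> proj d p = p.
Proof.
move=> hp; apply/mpolyP => m; rewrite proj_coef.
case: (boolP (m \in msupp p)) => hm; first by rewrite hp.
by rewrite memN_msupp_eq0 // if_same.
Qed.

Lemma proj_nil d p : (forall m, m \in msupp p -> ~~ mnm_of_deg grp d m) ->
  proj d p = 0.
Proof.
move=> hp; apply/mpolyP => m; rewrite proj_coef mcoeff0.
case: ifP => // hd; apply: memN_msupp_eq0; apply/negP => /hp.
by rewrite hd.
Qed.

End Helpers2.

Section Main.
Variables (K : fieldType) (N r : nat) (grp : 'I_N -> 'I_r).
Local Notation P := {mpoly K[N]}.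
Variable le : rel 'X_{1..N}.
Hypothesis hle : monomial_order le.
Variable ech : seq P -> seq P.
Hypothesis hech : forall s, is_ref le s (ech s).

Definition Good (gs : seq P) := forall g, g \in gs -> g != 0 /\ multihomogeneous grp g.

Lemma homogXM_pdeg d (h : P) b : h != 0 -> multihomogeneous grp h ->
  mnm_of_deg grp (fun i => d i - pdeg grp h i) b -> is_mhomog grp d ('X_[b] * h).
Proof.
move=> nz [e he] hb; apply: (homogXM he) => i.
move/forallP/(_ i)/eqP: hb => ->; rewrite (pdegE nz he).
by rewrite subrK.
Qed.

Lemma dir1 gs : Good gs -> forall d p, in_span (M3Hr grp le ech gs d) p ->
  is_mhomog grp d p /\ in_ideal gs p.
Proof.
elim: gs => [|f gs IH] hg d /=.
  apply: (span_ind (Q := fun p => is_mhomog grp d p /\ in_ideal [::] p)) => //; first by split; [exact: homog0 | exact: ideal0].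
  - by move=> p q [h1 h2] [h3 h4]; split; [exact: homogD | exact: idealD].
  - move=> a p [h1 [c hc]]; split; first exact: homogZ.
    by rewrite hc; exists (fun _ => 0); rewrite !big_ord0 scaler0.
have hg' : Good gs by move=> g hgs; apply: hg; rewrite inE hgs orbT.
have [nzf hf] : f != 0 /\ multihomogeneous grp f by apply: hg; rewrite inE eqxx.
apply: (span_ind (Q := fun p => is_mhomog grp d p /\ in_ideal (f :: gs) p)).
- by split; [exact: homog0 | exact: ideal0].
- by move=> p q [h1 h2] [h3 h4]; split; [exact: homogD | exact: idealD].
- move=> a p [h1 h2]; split; first exact: homogZ.
  by rewrite -mul_mpolyC; apply: idealM.
move=> q; rewrite mem_cat => /orP [/span_mem /(IH hg') [h1 h2]|].
  by split=> //; apply: (ideal_sub _ h2) => x hx; rewrite inE hx orbT.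
case/mapP => b; rewrite mem_filter => /andP [_ /monos_deg hb] ->; split.
  exact: homogXM_pdeg.
by apply: idealM; apply: ideal_mem; rewrite inE eqxx.
Qed.

Lemma dir2_from_gen gs : Good gs ->
  (forall h d m, h \in gs -> mnm_of_deg grp (fun i => d i - pdeg grp h i) m ->
     in_span (M3Hr grp le ech gs d) ('X_[m] * h)) ->
  forall d p, is_mhomog grp d p -> in_ideal gs p -> in_span (M3Hr grp le ech gs d) p.
Proof.
move=> hg gen d p0 hp hi; rewrite -(proj_id hp); move: d {hp}.
apply: (ideal_ind (Q := fun p => forall d, in_span (M3Hr grp le ech gs d) (proj grp d p))) p0 hi.
- by move=> d; rewrite proj0; apply: span0.
- by move=> p q h1 h2 d; rewrite projD; apply: spanD.
move=> g h hh d.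
have [nzh hmh] := hg h hh.
rewrite {1}(mpolyE g) mulr_suml proj_sum; apply: span_sum => m _.
rewrite -scalerAl projZ; apply: spanZ.
case: (boolP (mnm_of_deg grp (fun i => d i - pdeg grp h i) m)) => hm.
  by rewrite proj_id; [apply: gen | apply: homogXM_pdeg].
rewrite proj_nil; first exact: span0.
move=> x hx; apply/negP => hxd; move/negP: hm; apply.
case: hmh => e he.
have hX : is_mhomog grp (fun i => (mdegv grp m i)%:Z + e i) ('X_[m] * h).
  by apply: (homogXM he).
apply/forallP => i; move/hX/forallP/(_ i)/eqP: (hx).
move/forallP/(_ i)/eqP: hxd => -> ->.
by rewrite (pdegE nzh he) addrK.
Qed.

Lemma gen gs : Good gs -> forall h d m, h \in gs ->
  mnm_of_deg grp (fun i => d i - pdeg grp h i) m ->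
  in_span (M3Hr grp le ech gs d) ('X_[m] * h).
Proof.
elim: gs => [|f gs IH] hg h d m //.
have hg' : Good gs by move=> g hgs; apply: hg; rewrite inE hgs orbT.
have [nzf hf] : f != 0 /\ multihomogeneous grp f by apply: hg; rewrite inE eqxx.
have dir2' := dir2_from_gen hg' (IH hg').
rewrite /=.
set A := M3Hr grp le ech gs d.
set d' := fun i => d i - pdeg grp f i.
set L := [seq lm le e | e <- ech (M3Hr grp le ech gs d') & e != 0].
set R := [seq 'X_[b] * f | b <- monos grp d' & b \notin L].
have spanA : forall p, in_span A p -> in_span (A ++ R) p.
  by apply: span_sub => q hq; apply: span_mem; rewrite mem_cat hq.
rewrite inE => /orP [/eqP ->|hh]; last by move=> hm; apply: spanA; apply: IH.
move: m; suff: forall n m, count (fun x => le x m) (monos grp d') = n ->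
   mnm_of_deg grp d' m -> in_span (A ++ R) ('X_[m] * f).
  by move=> H m; apply: H.
elim/ltn_ind => n IHn m cnt hm.
case: (boolP (m \in L)) => hmL; last first.
  apply: span_mem; rewrite mem_cat; apply/orP; right.
  by apply/mapP; exists m => //; rewrite mem_filter hmL deg_monos.
case/mapP: hmL => e; rewrite mem_filter => /andP [nze he] me.
have [_ hsp _] := hech (M3Hr grp le ech gs d').
have /hsp /(dir1 hg') [hde hie] := span_mem he.
have ms : m \in msupp e by rewrite me lm_supp.
have nzc : e@_m != 0 by rewrite -mcoeff_msupp.
have Ee : e * f = \sum_(x <- msupp e) e@_x *: ('X_[x] * f).
  by rewrite {1}(mpolyE e) mulr_suml; apply: eq_bigr => x _; rewrite scalerAl.
have -> : 'X_[m] * f = (e@_m)^-1 *: (e * f -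
     \sum_(x <- msupp e | x != m) e@_x *: ('X_[x] * f)).
  rewrite [in X in X - _]Ee (bigD1_seq m) ?msupp_uniq //= addrK.
  by rewrite scalerA mulVf // scale1r.
apply: spanZ; apply: spanD; last apply: spanN.
  apply: spanA; apply: dir2'.
    rewrite Ee big_seq; apply: homog_sum => x hx; apply: homogZ.
    by apply: homogXM_pdeg => //; apply: hde.
  by rewrite mulrC; apply: idealM.
rewrite big_seq_cond; apply: span_sum => x /andP [hx xm]; apply: spanZ.
have hxd := hde x hx.
apply: (IHn _ _ x erefl hxd); rewrite -cnt.
have hxm : le x m by rewrite me; apply: le_lm.
apply: count_lt => //; first exact: deg_monos.
apply/negP => hmx; move/negP: xm; apply.
by case: hle => _ ha _ _ _; rewrite (ha x m) // hxm hmx.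
Qed.

End Main.

Unset Implicit Arguments.
Set Strict Implicit.

Theorem mainTheorem16 (K : fieldType) (charK0 : [pchar K] =i pred0)
  (N r : nat) (grp : 'I_N -> 'I_r) (grp_surj : forall i, exists j, grp j = i)
  (le : rel 'X_{1..N}) (hle : monomial_order le)
  (ech : seq {mpoly K[N]} -> seq {mpoly K[N]})
  (hech : forall s, is_ref le s (ech s))
  (fs : seq {mpoly K[N]}) (hk : (0 < size fs)%N)
  (hfs : forall f, f \in fs -> f != 0 /\ multihomogeneous grp f)
  (d : 'I_r -> int) :
  forall p : {mpoly K[N]},
    in_span (M3H grp le ech fs d) p <-> (is_mhomog grp d p /\ in_ideal fs p).
Proof.
move=> p; rewrite /M3H.
have hg : Good grp (rev fs) by move=> g; rewrite mem_rev; apply: hfs.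
split.
  move/(dir1 hg) => [h1 h2]; split => //.
  by apply: (ideal_sub _ h2) => x; rewrite mem_rev.
case=> h1 h2; apply: (dir2_from_gen hg (gen hle hech hg)) => //.
by apply: (ideal_sub _ h2) => x; rewrite mem_rev.
Qed.
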